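(* Fix an integer $k\ge 2$ (the alphabet size). Say that $[a,b]_n$ is realizable over the $k$-letter alphabet if there is a marking of the $n$-dimensional $k$-ary hypercube in which every vertex is marked exactly $a$ times or exactly $b$ times. Then: (a) if $[a,b]_n$ is realizable, then $[a+1,b+1]_{n+k}$ is realizable; (b) if $[a,b]_n$ is realizable, then $[\ell a,\ell b]_{\ell n}$ is realizable for every positive integer $\ell$.
   Context: The $n$-dimensional $k$-ary hypercube has vertex set $\{0,1,\dots,k-1\}^n$. Its ''edges'' (lines) are the $nk^{n-1}$ sets of $k$ vertices obtained by fixing all coordinates except one coordinate $i$ and letting coordinate $i$ range over all $k$ values. A marking chooses, for each line, one vertex of that line; the number of times a vertex is marked is the number of lines for which it is the chosen vertex. (For $k=2$ this is an orientation of the $n$-cube, marking the head of each edge, and the mark count is the in-degree.) *)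

(* Defs.v *)
From mathcomp Require Import all_boot.
Set Implicit Arguments. Unset Strict Implicit. Unset Printing Implicit Defensive.

Definition vertex (k n : nat) := {ffun 'I_n -> 'I_k}.

Definition line_through (k n : nat) (i : 'I_n) (x : vertex k n) : {set vertex k n} :=
  [set y : vertex k n | [forall j : 'I_n, (j != i) ==> (y j == x j)]].

Definition is_line (k n : nat) (L : {set vertex k n}) : bool :=
  [exists i : 'I_n, exists x : vertex k n, L == line_through i x].

Definition is_marking (k n : nat) (mk : {set vertex k n} -> vertex k n) : Prop :=
  forall L : {set vertex k n}, is_line L -> mk L \in L.

Definition mark_count (k n : nat) (mk : {set vertex k n} -> vertex k n)
  (v : vertex k n) : nat :=
  #|[set L : {set vertex k n} | is_line L && (mk L == v)]|.

Definition realizable (k n a b : nat) : Prop :=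
  exists mk : {set vertex k n} -> vertex k n,
    is_marking mk /\ forall v : vertex k n, mark_count mk v = a \/ mark_count mk v = b.

(* Main.v *)
Require Import Defs.
From mathcomp Require Import all_boot all_algebra.
Set Implicit Arguments. Unset Strict Implicit. Unset Printing Implicit Defensive.
Import GRing.Theory.

Section Gen.
Variables (k n : nat).
Local Notation K := k.+2.

Lemma line_self (i : 'I_n) (x : vertex K n) : x \in line_through i x.
Proof. by rewrite inE; apply/forallP => j; apply/implyP. Qed.

Lemma line_agree i (x y : vertex K n) :
  y \in line_through i x -> forall j, j != i -> y j = x j.
Proof. rewrite inE => /forallP H j Hj; exact/eqP/(implyP (H j)). Qed.

Lemma line_eq i (x y : vertex K n) :
  y \in line_through i x -> line_through i y = line_through i x.
Proof.
move=> Hy; apply/setP => z; rewrite !inE; apply/forallP/forallP => H j;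
  apply/implyP => Hj; have := implyP (H j) Hj; by rewrite (line_agree Hy Hj).
Qed.

Definition upd (x : vertex K n) (i : 'I_n) (t : 'I_K) : vertex K n :=
  [ffun j => if j == i then t else x j].

Lemma upd_line i x t : upd x i t \in line_through i x.
Proof. rewrite inE; apply/forallP => j; apply/implyP => Hj; by rewrite ffunE (negPf Hj). Qed.

Lemma line_eqv i (x w : vertex K n) :
  w \in line_through i x -> (w == x) = (w i == x i).
Proof.
move=> Hw; apply/eqP/eqP => [-> // | Hi]; apply/ffunP => j.
case: (eqVneq j i) => [-> // | Hj]; exact: line_agree Hw j Hj.
Qed.

Lemma line_dir i j (x y : vertex K n) : line_through i x = line_through j y -> i = j.
Proof.
move=> E; apply/eqP; apply/negPn/negP => Hij.
have [t Ht] : exists t : 'I_K, t != x i.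
  case: (x i =P ord0) => [-> | /eqP H]; first by exists ord_max.
  by exists ord0; rewrite eq_sym.
have H1 : upd x i t \in line_through j y by rewrite -E upd_line.
have H2 : x \in line_through j y by rewrite -E line_self.
have := line_agree H1 Hij; have := line_agree H2 Hij.
rewrite ffunE eqxx => Exi Et.
by rewrite Et Exi eqxx in Ht.
Qed.

Lemma line_is_line i (x : vertex K n) : is_line (line_through i x).
Proof. by apply/existsP; exists i; apply/existsP; exists x. Qed.

Lemma count_char mk (v : vertex K n) : is_marking mk ->
  mark_count mk v = #|[set i | mk (line_through i v) == v]|.
Proof.
move=> Hmk; rewrite /mark_count.
have -> : [set L | is_line L && (mk L == v)] =
   (fun i => line_through i v) @: [set i | mk (line_through i v) == v].
  apply/setP => L; rewrite inE; apply/andP/imsetP.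
  - case=> HL /eqP Hv; have Hm := Hmk L HL.
    case/existsP: HL => i /existsP[x /eqP EL].
    rewrite Hv EL in Hm.
    exists i; last by rewrite EL (line_eq Hm).
    by rewrite inE (line_eq Hm) -EL Hv.
  - case=> i; rewrite inE => /eqP Hv ->; split; first exact: line_is_line.
    by rewrite Hv.
rewrite card_imset // => i j; exact: line_dir.
Qed.

Definition realizable' (a b : nat) : Prop :=
  exists c : 'I_n -> vertex K n -> 'I_K,
    (forall i (x y : vertex K n), y \in line_through i x -> c i y = c i x) /\
    forall v : vertex K n,
      #|[set i | v i == c i v]| = a \/ #|[set i | v i == c i v]| = b.

Lemma realizable_to a b : realizable K n a b -> realizable' a b.
Proof.
case=> mk [Hmk Hc].
exists (fun i x => mk (line_through i x) i); split.
- by move=> i x y Hy; rewrite (line_eq Hy).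
- move=> v.
  have -> : [set i | v i == mk (line_through i v) i] =
            [set i | mk (line_through i v) == v].
    apply/setP => i; rewrite !inE (line_eqv (Hmk _ (line_is_line i v))).
    by rewrite eq_sym.
  rewrite -count_char //; exact: Hc.
Qed.

Lemma realizable_from a b : realizable' a b -> realizable K n a b.
Proof.
case=> c [Hloc Hc].
pose v0 : vertex K n := [ffun => ord0].
pose mk (L : {set vertex K n}) :=
  if [pick p : 'I_n * vertex K n | L == line_through p.1 p.2] is Some p
  then upd p.2 p.1 (c p.1 p.2) else v0.
have mkE : forall i x, exists y, line_through i x = line_through i y /\
                               mk (line_through i x) = upd y i (c i y).
  move=> i x; rewrite /mk; case: pickP => [[j y] /= /eqP E | H].
  - have Eij := line_dir E; subst j; by exists y.
  - by have := H (i, x); rewrite /= eqxx.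
have Hmk : is_marking mk.
  move=> L /existsP[i /existsP[x /eqP ->]].
  have [y [E ->]] := mkE i x; by rewrite E upd_line.
exists mk; split => // v; rewrite count_char //.
have -> : [set i | mk (line_through i v) == v] = [set i | v i == c i v].
  apply/setP => i; rewrite !inE; have [y [E ->]] := mkE i v.
  have Hv : v \in line_through i y by rewrite -E line_self.
  have Hw : upd y i (c i y) \in line_through i v by rewrite E upd_line.
  by rewrite (line_eqv Hw) ffunE eqxx -(Hloc _ _ _ Hv) eq_sym.
exact: Hc.
Qed.

End Gen.

Lemma card_setE (T : finType) (P : pred T) : #|[set i | P i]| = \sum_(i : T) (P i : nat).
Proof. by rewrite -sum1_card big_mkcond; apply: eq_bigr => i _; rewrite inE; case: (P i). Qed.

Lemma card_split m p (P : pred 'I_(m + p)) :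
  #|[set i | P i]| = #|[set i : 'I_m | P (lshift p i)]| + #|[set j : 'I_p | P (rshift m j)]|.
Proof. by rewrite !card_setE big_split_ord. Qed.

Lemma split_lshift m p (i : 'I_m) : split (lshift p i) = inl i.
Proof. exact: (unsplitK (inl i)). Qed.
Lemma split_rshift m p (i : 'I_p) : split (rshift m i) = inr i.
Proof. exact: (unsplitK (inr i)). Qed.

Definition resA k n (v : vertex k.+2 (n + k.+2)) : vertex k.+2 n :=
  [ffun j => v (lshift k.+2 j)].

Definition cA k n (c : 'I_n -> vertex k.+2 n -> 'I_k.+2)
  (i : 'I_(n + k.+2)) (v : vertex k.+2 (n + k.+2)) : 'I_k.+2 :=
  match split i with
  | inl i0 => c i0 (resA v)
  | inr j => (j - \sum_(m < k.+2 | m != j) v (rshift n m))%R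
  end.

Lemma partA k n a b : realizable' k n a b -> realizable' k (n + k.+2) a.+1 b.+1.
Proof.
case=> c [Hloc Hc]; exists (cA c); split.
- move=> i x y; rewrite /cA -(splitK i); case: (split i) => [i0 | j] /= Hy.
  + rewrite split_lshift; apply: Hloc; rewrite inE; apply/forallP => j.
    apply/implyP => Hj; rewrite !ffunE; apply/eqP; apply: (line_agree Hy).
    by apply: contra Hj => /eqP E; rewrite (lshift_inj E).
  + rewrite split_rshift; congr (_ - _)%R; apply: eq_bigr => m Hm.
    apply: (line_agree Hy); by apply: contra Hm => /eqP E; rewrite (rshift_inj E).
- move=> v; rewrite card_split.
  have -> : #|[set j : 'I_k.+2 | v (rshift n j) == cA c (rshift n j) v]| = 1.
    rewrite -(cards1 (\sum_(m < k.+2) v (rshift n m))%R); apply: eq_card => j.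
    rewrite !inE /cA split_rshift eq_sym subr_eq [in RHS](bigD1 j) //=.
    idtac.
  have -> : #|[set i : 'I_n | v (lshift k.+2 i) == cA c (lshift k.+2 i) v]| =
            #|[set i | resA v i == c i (resA v)]|.
    by apply: eq_card => i; rewrite !inE /cA split_lshift ffunE.
  by rewrite !addn1; case: (Hc (resA v)) => ->; [left | right].
Qed.

Definition eB l n (I : 'I_(l * n)) : 'I_l * 'I_n :=
  enum_val (cast_ord (esym (mxvec_cast l n)) I).
Definition eB' l n (p : 'I_l * 'I_n) : 'I_(l * n) :=
  cast_ord (mxvec_cast l n) (enum_rank p).

Lemma eBK l n : cancel (@eB' l n) (@eB l n).
Proof. by move=> p; rewrite /eB /eB' cast_ordK enum_rankK. Qed.
Lemma eB'K l n : cancel (@eB l n) (@eB' l n).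
Proof. by move=> I; rewrite /eB /eB' enum_valK cast_ordKV. Qed.

Definition phiB k l n (v : vertex k.+2 (l * n)) : vertex k.+2 n :=
  [ffun i => (\sum_(t < l) v (eB' (t, i)))%R].

Definition cB k l n (c : 'I_n -> vertex k.+2 n -> 'I_k.+2)
  (I : 'I_(l * n)) (v : vertex k.+2 (l * n)) : 'I_k.+2 :=
  (c (eB I).2 (phiB v) - \sum_(t < l | t != (eB I).1) v (eB' (t, (eB I).2)))%R.

Lemma partB k n a b l : realizable' k n a b -> realizable' k (l * n) (l * a) (l * b).
Proof.
case=> c [Hloc Hc]; exists (cB c); split.
- move=> I x y Hy; rewrite /cB.
  have Hp : phiB y \in line_through (eB I).2 (phiB x).
    rewrite inE; apply/forallP => i; apply/implyP => Hi; rewrite !ffunE.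
    apply/eqP; apply: eq_bigr => t _; apply: (line_agree Hy).
    by apply: contra Hi => /eqP E; rewrite -E eBK.
  rewrite (Hloc _ _ _ Hp); congr (_ - _)%R; apply: eq_bigr => t Ht.
  apply: (line_agree Hy); by apply: contra Ht => /eqP E; rewrite -E eBK.
- move=> v.
  pose P i := phiB v i == c i (phiB v).
  have -> : [set I | v I == cB c I v] = (@eB' l n) @: [set p | P p.2].
    apply/setP => I; rewrite [in LHS]inE.
    have -> : (v I == cB c I v) = P (eB I).2.
      rewrite /cB /P eq_sym subr_eq eq_sym {1}(ffunE _ (eB I).2).
      by rewrite [in RHS](bigD1 (eB I).1) //= -surjective_pairing eB'K.
    apply/idP/imsetP => [HI | [p Hp ->]].
    + by exists (eB I); rewrite ?inE ?eB'K.
    + by rewrite eBK; rewrite inE in Hp.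
  rewrite card_imset; last exact: can_inj (@eBK l n).
  have -> : [set p : 'I_l * 'I_n | P p.2] = setX setT [set i | P i].
    by apply/setP => -[t i]; rewrite !inE.
  rewrite cardsX cardsT card_ord.
  by case: (Hc (phiB v)) => ->; [left | right].
Qed.

Theorem theorem5 (k : nat) (hk : 2 <= k) :
  (forall n a b : nat, realizable k n a b -> realizable k (n + k) a.+1 b.+1) /\
  (forall n a b : nat, realizable k n a b ->
     forall l : nat, 0 < l -> realizable k (l * n) (l * a) (l * b)).
Proof.
case: k hk => [|[|k]] // _; split.
- move=> n a b /realizable_to H; apply: realizable_from; exact: partA.
- move=> n a b /realizable_to H l _; apply: realizable_from; exact: partB.
Qed.
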